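(* Let $G$ be an unweighted graph (all edges have equal weight) that is not a multigraph and is $2$-connected, and let $s, d$ be a source-destination pair. Suppose a forwarding subgraph (FS) uses the shortest path $P(s,d)$ between $s$ and $d$ as the primary path and can avoid any single link failure along the primary path. Then the number of edges in the FS is at least $\left\lceil \dfrac{5|P(s,d)|}{2} \right\rceil$, where $|P(s,d)|$ is the number of edges of $P(s,d)$. Moreover, there exist graphs for which this bound is tight.
   Context: A forwarding subgraph (FS) is a directed acyclic subgraph of the network graph specifying the paths a packet may take from source $s$ to destination $d$. It contains a designated primary path from $s$ to $d$. ''Avoiding any single link failure along the primary path'' means that for every node $v_i$ on the primary path, the FS contains an alternate path from $v_i$ to $d$ that does not use $v_i$'s outgoing primary-path link. Throughout, the graph is assumed not to be a multigraph and to be $2$-connected. *)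

(* Defs.v *)
From mathcomp Require Import all_boot.
Set Implicit Arguments. Unset Strict Implicit. Unset Printing Implicit Defensive.

Definition simple_graph (T : finType) (e : rel T) : Prop :=
  symmetric e /\ irreflexive e.

Definition del_vertex (T : finType) (e : rel T) (v : T) : rel T :=
  [rel x y | [&& e x y, x != v & y != v]].

Definition two_connected (T : finType) (e : rel T) : Prop :=
  [/\ 2 < #|T|,
      (forall x y : T, connect e x y) &
      (forall v x y : T, x != v -> y != v -> connect (del_vertex e v) x y)].

(* A walk s :: p in G from s to d; its number of edges is size p. *)
Definition walk (T : finType) (e : rel T) (s d : T) (p : seq T) : bool :=
  path e s p && (last s p == d).

Definition shortest_path (T : finType) (e : rel T) (s d : T) (p : seq T) : Prop :=
  walk e s d p /\ forall q : seq T, walk e s d q -> size p <= size q.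

Definition uses_link (T : finType) (x : T) (q : seq T) (a b : T) : bool :=
  has (fun pr : T * T => (pr == (a, b)) || (pr == (b, a))) (zip (x :: q) q).

(* A forwarding subgraph F (set of directed arcs) of G from s to d with
   primary path s :: p: every arc is an (oriented) edge of G, F is acyclic,
   and F contains the primary path. *)
Definition forwarding_subgraph (T : finType) (e : rel T) (F : rel T)
    (s d : T) (p : seq T) : Prop :=
  [/\ (forall x y, F x y -> e x y),
      (forall x y, F x y -> ~~ connect F y x) &
      walk F s d p].

(* Avoiding any single link failure along the primary path s = v_0, ..., v_n = d:
   for every i < n, F contains a path from v_i to d not using the link
   (v_i, v_{i+1}). *)
Definition avoids_single_link_failure (T : finType) (F : rel T)
    (s d : T) (p : seq T) : Prop :=
  forall i, i < size p ->
    exists q : seq T,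
      walk F (nth s (s :: p) i) d q &&
      ~~ uses_link (nth s (s :: p) i) q (nth s (s :: p) i) (nth s p i).

Definition fs_size (T : finType) (F : rel T) : nat :=
  #|[set a : T * T | F a.1 a.2]|.

Definition ceil_5half (k : nat) : nat := (5 * k).+1 %/ 2.

(* Main.v *)
Require Import Defs.
From mathcomp Require Import all_boot zify.
Set Implicit Arguments. Unset Strict Implicit. Unset Printing Implicit Defensive.

Definition reachk (T : finType) (e : rel T) (d : T) (k : nat) (x : T) : bool :=
  [exists t : k.-tuple T, walk e x d t].
Definition dist (T : finType) (e : rel T) (d : T) (N : nat) (x : T) : nat :=
  find (fun k => reachk e d k x) (iota 0 N).

Lemma dist_le (T : finType) (e : rel T) d N x q :
  walk e x d q -> dist e d N x <= size q.
Proof.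
move=> w; rewrite /dist; case: (ltnP (size q) N) => h; last first.
  by apply: leq_trans (find_size _ _) _; rewrite size_iota.
rewrite -ltnS; apply: find_ltn; apply/hasP; exists (size q).
  by rewrite take_iota mem_iota /=; lia.
by apply/existsP; exists (in_tuple q).
Qed.

Lemma dist_max (T : finType) (e : rel T) d N x : dist e d N x <= N.
Proof. by rewrite /dist; apply: leq_trans (find_size _ _) _; rewrite size_iota. Qed.

Lemma dist_lt (T : finType) (e : rel T) d N x :
  dist e d N x < N -> exists q, walk e x d q /\ size q = dist e d N x.
Proof.
rewrite /dist => h.
have hh : has (fun k => reachk e d k x) (iota 0 N) by rewrite has_find size_iota.
have := nth_find 0 hh; rewrite nth_iota // add0n => /existsP [t ht].
by exists (val t); rewrite size_tuple.
Qed.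

Lemma dist_edge (T : finType) (e : rel T) d N x y :
  e x y -> dist e d N x <= (dist e d N y).+1.
Proof.
move=> exy; case: (ltnP (dist e d N y) N) => h.
  have [q [/andP [pq lq] sq]] := dist_lt h.
  rewrite -sq; apply: (@dist_le _ _ _ _ _ (y :: q)); by rewrite /walk /= exy pq.
by apply: leq_trans (dist_max _ _ _ _) _; apply: leqW.
Qed.

Lemma dist_lower (T : finType) (e : rel T) d N x k :
  (forall q, walk e x d q -> k <= size q) -> k <= N -> k <= dist e d N x.
Proof.
move=> H hk; case: (ltnP (dist e d N x) N) => h; last by apply: leq_trans hk h.
have [q [w <-]] := dist_lt h; exact: H.
Qed.

Lemma dist0 (T : finType) (e : rel T) d N x : dist e d N x = 0 -> 0 < N -> x = d.
Proof.
move=> h hN; have hl : dist e d N x < N by rewrite h.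
have [q [/andP [_ /eqP l] sq]] := dist_lt hl.
by move: sq l; rewrite h; case: q.
Qed.

Lemma last_take_nth (T : Type) (s : T) p a :
  a <= size p -> last s (take a p) = nth s (s :: p) a.
Proof.
elim: p s a => [|x p IH] s [|a] //= h.
rewrite IH //; apply: set_nth_default => /=; by rewrite ltnS.
Qed.

Lemma walk_prefix (T : finType) (e : rel T) (s d : T) p c q :
  c <= size p -> path e s p -> walk e (nth s (s :: p) c) d q ->
  walk e s d (take c p ++ q).
Proof.
move=> hc hp /andP [pq lq].
move: hp; rewrite -{1}(cat_take_drop c p) cat_path => /andP [hp1 _].
by rewrite /walk cat_path last_cat last_take_nth // hp1 pq.
Qed.

Lemma walk_suffix (T : finType) (e : rel T) (s d : T) p c :
  c <= size p -> walk e s d p -> walk e (nth s (s :: p) c) d (drop c p).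
Proof.
move=> hc /andP [hp lp].
move: hp lp; rewrite -{1 2}(cat_take_drop c p) cat_path last_cat => /andP [_ h2] l.
by rewrite /walk -last_take_nth // h2 l.
Qed.

Lemma shorten_size (T : eqType) (x : T) q :
  size (shorten x q) <= size q /\ (size (shorten x q) = size q -> uniq (x :: q)).
Proof.
elim: q x => [|y q IH] x //=.
case: ifP => hx.
  have [h1 _] := IH x; split; first by apply: leqW.
  by move=> h; move: h1; rewrite h ltnn.
have [h1 h2] := IH y; split => // [[h]].
by have := h2 h.
Qed.

Lemma shorten_walk (T : eqType) (e : rel T) x p :
  path e x p -> path e x (shorten x p) && (last x (shorten x p) == last x p).
Proof. by move=> hp; case: (shortenP hp) => p0 hp0 _ _; rewrite hp0 eqxx. Qed.

Lemma uniq_shortest (T : finType) (e : rel T) (s d : T) p :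
  shortest_path e s d p -> uniq (s :: p).
Proof.
move=> [/andP [hp lp] short].
have w : walk e s d (shorten s p).
  have := shorten_walk hp.
  by rewrite /walk => /andP [-> /eqP ->].
have [h1 h2] := shorten_size s p.
apply: h2; apply/eqP; rewrite eqn_leq h1; exact: short.
Qed.

Lemma cover_count (P : pred nat) : ~~ P 0 -> forall n,
  (forall k, k < n -> P k || P k.+1) -> n.+1 %/ 2 <= count P (iota 1 n).
Proof.
move=> P0 n; elim: n {-2}n (leqnn n) => [|N IH] n hn H.
  by have -> : n = 0 by lia.
case: n hn H => [|[|n]] hn H //.
  by have := H 0 isT; rewrite (negbTE P0) /= => ->.
rewrite -[n.+2]addn2 iotaD count_cat /=.
have := IH n (ltac:(lia)) (fun k hk => H k (ltac:(lia))).
have := H n.+1 (ltac:(lia)).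
rewrite addnC add1n.
case: (P n.+1); case: (P n.+2) => //= _; lia.
Qed.

Lemma fs_size_sum (T : finType) (F : rel T) : fs_size F = \sum_x #|[set y | F x y]|.
Proof.
rewrite /fs_size -sum1_card.
rewrite (eq_bigr (fun x => \sum_(y in [set y | F x y]) 1)); last by move=> x _; rewrite sum1_card.
rewrite pair_big_dep; apply: eq_bigl => [[x y]]; by rewrite !inE.
Qed.

Lemma sum_ind (T : finType) (A : {pred T}) : \sum_x (x \in A) = #|A|.
Proof. by rewrite -sum1_card [RHS]big_mkcond; apply: eq_bigr => x _; case: (x \in A). Qed.

Lemma mem_idx (T : finType) (x s : T) p : x \in s :: p ->
  exists2 a, a <= size p & x = nth s (s :: p) a.
Proof.
move=> h; exists (index x (s :: p)); last by rewrite nth_index.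
by have := h; rewrite -index_mem /= ltnS.
Qed.

Ltac li := repeat match goal with | x := _ |- _ => subst x end; lia.

Lemma part1 (T : finType) (e : rel T) (s d : T) (p : seq T) (F : rel T) :
  shortest_path e s d p -> forwarding_subgraph e F s d p ->
  avoids_single_link_failure F s d p -> ceil_5half (size p) <= fs_size F.
Proof.
move=> sh [Fe Facyc wF] avoid.
have U := uniq_shortest sh.
move: sh => [wp short].
have hp : path e s p by case/andP: wp.
set n := size p.
set del := dist e d n.+1.
have dlast : d = nth s (s :: p) n.
  by case/andP: wp => _ /eqP <-; rewrite -last_take_nth // take_size.
have del_v : forall a, a <= n -> del (nth s (s :: p) a) = n - a.
  move=> a ha; apply/eqP; rewrite eqn_leq; apply/andP; split.
    by rewrite -(size_drop a p); apply: dist_le; apply: walk_suffix.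
  apply: dist_lower; last li.
  move=> q wq; have := short _ (walk_prefix ha hp wq).
  by rewrite size_cat size_takel //; li.
have del_off : forall c x, c <= n -> e (nth s (s :: p) c) x -> n <= del x + c.+1.
  move=> c x hc ex; case: (ltnP (del x) n.+1) => h; last li.
  have [q [/andP [pq lq] sq]] := dist_lt h.
  have w1 : walk e (nth s (s :: p) c) d (x :: q) by rewrite /walk /= ex pq.
  have := short _ (walk_prefix hc hp w1).
  rewrite size_cat size_takel //= sq; li.
have del_d : del d = 0.
  by apply/eqP; rewrite -leqn0; apply: (@dist_le _ _ _ _ _ [::]); rewrite /walk /= eqxx.
have Lind : forall m q x, path F x q -> last x q = d -> m < del x -> 0 < m ->
    exists2 y, y \in q & (del y = m /\ exists z, F y z).
  move=> m; elim => [|y q IH] x /=.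
    by move=> _ ->; rewrite del_d.
  case/andP => Fxy pq ly hm m0.
  have hxy : del x <= (del y).+1 by apply: dist_edge; apply: Fe.
  case: (leqP (del y) m) => hy.
    exists y; first by rewrite inE eqxx.
    split; first li.
    case: q pq ly {IH} => [|z q] /=.
      by move=> _ yd; move: hy hm hxy; rewrite yd del_d; li.
    by case/andP => Fyz _ _; exists z.
  have [y' y'q H] := IH y pq ly hy m0; exists y' => //; by rewrite inE y'q orbT.
have dmem : d \in s :: p by rewrite dlast mem_nth.
have nd : forall c, c < n -> nth s (s :: p) c != d.
  move=> c hc; rewrite dlast nth_uniq //=; li.
have det : forall c, c < n -> exists x1 q', [/\ F (nth s (s :: p) c) x1,
    x1 != nth s p c, path F x1 q' & last x1 q' = d].
  move=> c hc; have [q /andP [wq nl]] := avoid c hc.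
  move: wq nl; case: q => [|x1 q'].
    by rewrite /walk /= => /eqP vd; move: (nd c hc); rewrite vd eqxx.
  case/andP => /= /andP [F1 pq'] /eqP lq' nl.
  exists x1, q'; split => //.
  by apply: contraNneq nl => ->; rewrite /uses_link /= eqxx.
set W := [set x | (x \notin s :: p) && [exists z, F x z]].
have cover : forall c, c < n -> exists2 w, w \in W & (del w + c.+1 == n) || (del w + c == n).
  move=> c hc; have [x1 [q' [F1 x1ne pq' lq']]] := det c hc.
  have ncyc : forall y, connect F x1 y -> y != nth s (s :: p) c.
    move=> y cy; apply/eqP => ey; have := Facyc _ _ F1; by rewrite -ey cy.
  case: (leqP (del x1) (n - c)) => h1.
    have hlow := del_off c x1 (ltnW hc) (Fe _ _ F1).
    have x1off : x1 \notin s :: p.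
      apply/negP => /mem_idx [a ha ya]. have := del_v a ha; rewrite -ya => hd.
      have : a = c \/ a = c.+1 by li.
      case => ha'; subst a.
        by move: (ncyc x1 (connect0 _ _)); rewrite -ya eqxx.
      by move: x1ne; rewrite ya /= eqxx.
    exists x1.
      rewrite inE x1off /=.
      case: q' pq' lq' => [|z q''] /=.
        by move=> _ x1d; move: x1off; rewrite x1d dmem.
      by case/andP => Fz _ _; apply/existsP; exists z.
    apply/orP; li.
  have [y yq [dy [z Fyz]]] := Lind (n - c) q' x1 pq' lq' h1 (ltac:(li)).
  exists y.
    rewrite inE; apply/andP; split; last by apply/existsP; exists z.
    apply/negP => /mem_idx [a ha ya]. have := del_v a ha; rewrite -ya dy => hd.
    have ac : a = c by li.
    have yin : y \in x1 :: q' by rewrite inE yq orbT.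
    subst a; have := ncyc y (path_connect pq' yin).
    by rewrite -ya eqxx.
  apply/orP; right; li.
have Wsize : n.+1 %/ 2 <= #|W|.
  set P := fun k => k \in [seq del w | w <- enum W].
  have P0 : ~~ P 0.
    apply/negP => /mapP [w]; rewrite mem_enum inE => /andP [wn _] /esym w0.
    have := dist0 w0 (ltn0Sn _); move=> wd; by move: wn; rewrite wd dmem.
  have := cover_count P0 (n := n).
  have H : forall k, k < n -> P k || P k.+1.
    move=> k hk; have [w wW hw] := cover (n - k.+1) (ltac:(li)).
    have wm : del w \in [seq del w | w <- enum W] by apply: map_f; rewrite mem_enum.
    apply/orP; case/orP: hw => /eqP hw; [left | right]; rewrite /P.
      by have -> : k = del w by li.
    by have -> : k.+1 = del w by li.
  move=> /(_ H) h; apply: leq_trans h _.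
  rewrite -size_filter cardE -(size_map del).
  apply: uniq_leq_size; first by apply: filter_uniq; apply: iota_uniq.
  by move=> x; rewrite mem_filter => /andP [].
set Vs := take n (s :: p).
have Vcard : #|Vs| = n.
  have -> : #|Vs| = size Vs by apply/card_uniqP; apply: take_uniq.
  by rewrite size_takel //=.
rewrite fs_size_sum.
apply: (@leq_trans (\sum_x ((x \in Vs) + (x \in Vs) + (x \in W)))); last first.
  apply: leq_sum => x _.
  case hV: (x \in Vs).
    have hW : (x \in W) = false.
      by rewrite inE (mem_take hV).
    rewrite hW.
    have ix : index x Vs < n.
      have : x \in Vs by rewrite hV.
      by rewrite -index_mem /Vs size_takel //=.
    have xe : x = nth s (s :: p) (index x Vs).
      by rewrite -(nth_take _ ix) nth_index.
    have [x1 [q' [F1 x1ne _ _]]] := det _ ix.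
    have F2 : F (nth s (s :: p) (index x Vs)) (nth s p (index x Vs)).
      by move/andP: wF => [/(pathP s) H _]; apply: H.
    have : #|[set nth s p (index x Vs); x1]| <= #|[set y | F x y]|.
      apply: subset_leq_card; apply/subsetP => y; rewrite !inE => /orP [] /eqP ->;
        by rewrite {1}xe.
    by rewrite cards2 eq_sym x1ne.
  case hW: (x \in W) => //.
  move: hW; rewrite inE => /andP [_ /existsP [z Fz]].
  rewrite /= card_gt0; apply/set0Pn; exists z; by rewrite inE.
rewrite !big_split /= !sum_ind Vcard /ceil_5half; li.
Qed.

Definition base (m : nat) (x y : nat) : bool :=
  (y == x.+1) || ((x.+1 == (5*m).+2) && (y == 0)) || [&& x < 3*m, x %% 3 != 2 & y == x + 2].
Definition en m x y := base m x y || base m y x.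
Definition Fn (m b : nat) (x y : nat) : bool :=
  [&& b <= x, x < 3*m & (y == x.+1) || (x %% 3 != 2) && (y == x + 2)].
Definition Pn (m b : nat) (x y : nat) : bool :=
  [&& b <= x, x < 3*m, x %% 3 != 2 & y == x + 1 + (x %% 3 == 1)].
Definition eG m : rel 'I_(5*m).+2 := fun x y => en m x y.
Definition FG m b : rel 'I_(5*m).+2 := fun x y => Fn m b x y.
Arguments eG : clear implicits.
Arguments FG : clear implicits.
Fixpoint pn0 j := if j is j'.+1 then pn0 j' ++ [:: 3*j'+1; 3*j'+3] else [::].
Definition phi m i := minn (2*(i %/ 3) + (i %% 3 != 0)) ((5*m).+2 - i).

Lemma eG_sym (m : nat) : symmetric (eG m).
Proof. by move=> x y; rewrite /eG /en orbC. Qed.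

Lemma eG_irr (m : nat) : irreflexive (eG m).
Proof. move=> x; rewrite /eG /en /base orbb; lia. Qed.

Lemma phi_edge (m x y : nat) : x < (5*m).+2 -> y < (5*m).+2 -> en m x y -> phi m y <= (phi m x).+1.
Proof. rewrite /en /base /phi; lia. Qed.

Lemma walk_phi (m : nat) (x : 'I_(5*m).+2) q :
  path (eG m) x q -> phi m (last x q) <= phi m x + size q.
Proof.
elim: q x => [|y q IH] x /=; first by rewrite addn0.
case/andP => exy pq; have := IH y pq; have := phi_edge (ltn_ord x) (ltn_ord y) exy.
lia.
Qed.

Lemma seg n (R : rel 'I_n.+1) a b : a <= b -> b <= n ->
  (forall i, a <= i -> i < b -> R (inord i) (inord i.+1)) ->
  connect R (inord a) (inord b).
Proof.
elim: b => [|b IH] hab hb H.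
  by have -> : a = 0 by lia.
case: (ltnP b a) => h.
  by have -> : a = b.+1 by lia.
apply: connect_trans (IH h (ltnW hb) (fun i h1 h2 => H i h1 (ltnW h2))) _.
by apply: connect1; apply: H.
Qed.

Lemma inord_eq n (v : 'I_n.+1) i : i < n.+1 -> (inord i == v) = (i == (v : nat)).
Proof. by move=> h; rewrite -(inj_eq val_inj) /= inordK. Qed.

Lemma two_conn (m : nat) : 0 < m -> two_connected (eG m).
Proof.
move=> m0; split.
- by rewrite card_ord; lia.
- have H0 : forall x : 'I_(5*m).+2, connect (eG m) (inord 0) x.
    move=> x; rewrite -(inord_val x); apply: seg => //; first by have := ltn_ord x; lia.
    move=> i _ hi; rewrite /eG /en /base !inordK; have := ltn_ord x; lia.
  move=> x y; apply: connect_trans (H0 y).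
  by rewrite (sym_connect_sym (@eG_sym m)).
- move=> v x y xv yv.
  set D := del_vertex (eG m) v.
  have Dsym : symmetric D.
    by move=> a b; rewrite /D /del_vertex /= eG_sym; case: (a != v); case: (b != v); rewrite ?andbF ?andbT.
  set h : 'I_(5*m).+2 := if (v : nat) == 0 then inord 1 else inord 0.
  have toh : forall z, z != v -> connect D z h.
    move=> z zv; rewrite (sym_connect_sym Dsym).
    have vz : (z : nat) != v by [].
    move: vz; rewrite -/(nat_of_ord z) => vz.
    rewrite /h; case: ifP => /eqP v0.
      by rewrite -(inord_val z); apply: seg; [have := ltn_ord z; lia | have := ltn_ord z; lia | move=> i h1 h2; rewrite /D /del_vertex /= /eG /en /base !inordK ?inord_eq; have := ltn_ord z; have := ltn_ord v; lia].
    case: (ltnP z v) => hzv.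
      by rewrite -(inord_val z); apply: seg; [have := ltn_ord z; lia | have := ltn_ord z; lia | move=> i h1 h2; rewrite /D /del_vertex /= /eG /en /base !inordK ?inord_eq; have := ltn_ord z; have := ltn_ord v; lia].
    rewrite -(sym_connect_sym Dsym).
    apply: (connect_trans (y := inord (5*m).+1)).
      by rewrite -(inord_val z); apply: seg; [have := ltn_ord z; lia | have := ltn_ord z; lia | move=> i h1 h2; rewrite /D /del_vertex /= /eG /en /base !inordK ?inord_eq; have := ltn_ord z; have := ltn_ord v; lia].
    apply: connect1; rewrite /D /del_vertex /= /eG /en /base !inordK // !inord_eq //.
    have := ltn_ord v; have := ltn_ord z; lia.
  apply: connect_trans (toh x xv) _.
  by rewrite (sym_connect_sym Dsym); apply: toh.
Qed.

Lemma pn0_last j : last 0 (pn0 j) = 3*j.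
Proof. elim: j => //= j IH; rewrite last_cat /=; lia. Qed.

Lemma pn0_size j : size (pn0 j) = 2*j.
Proof. elim: j => //= j IH; rewrite size_cat IH /=; lia. Qed.

Lemma pn0_path M j : j <= M -> path (Pn M 0) 0 (pn0 j).
Proof.
elim: j => //= j IH hj; rewrite cat_path IH ?pn0_last /=; last lia.
rewrite /Pn; lia.
Qed.

Lemma pn0_head j : pn0 j.+1 = 1 :: drop 1 (pn0 j.+1).
Proof.
elim: j => [|j IH]; first by reflexivity.
have -> : pn0 j.+2 = pn0 j.+1 ++ [:: 3*j.+1+1; 3*j.+1+3] by [].
by rewrite IH /= drop0.
Qed.

Lemma path_mono M b x q : path (Pn M 0) x q -> b <= x -> path (Pn M b) x q.
Proof.
elim: q x => //= y q IH x /andP [h pq] hb.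
rewrite IH //; last by move: h; rewrite /Pn; lia.
by move: h; rewrite /Pn; lia.
Qed.

Lemma pn_facts m b : 0 < m -> b <= 1 ->
  [/\ path (Pn m b) b (drop b (pn0 m)), size (drop b (pn0 m)) = 2*m - b
    & last b (drop b (pn0 m)) = 3*m].
Proof.
move=> m0 hb; rewrite size_drop pn0_size; split => //.
- case: b hb => [|[|b]] hb //.
    by rewrite drop0; apply: path_mono; [apply: pn0_path|].
  case: m m0 => // m _; have h0 := pn0_path (leqnn m.+1).
  rewrite pn0_head /= in h0.
  by apply: path_mono h0 _.
- case: b hb => [|[|b]] hb //; first by rewrite drop0 pn0_last.
  case: m m0 => // m _; rewrite -(pn0_last m.+1) [in RHS]pn0_head //.
Qed.

Lemma path_inord n (R : rel nat) (Rt : rel 'I_n.+1) x q :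
  (forall a b, a < n.+1 -> b < n.+1 -> R a b -> Rt (inord a) (inord b)) ->
  x < n.+1 -> all (fun a => a < n.+1) q -> path R x q -> path Rt (inord x) (map inord q).
Proof.
move=> H; elim: q x => //= y q IH x hx /andP [hy hq] /andP [Rxy pq].
by rewrite H // IH.
Qed.

Lemma path_bound (R : rel nat) B x q : (forall a b, R a b -> b <= B) -> path R x q ->
  all (fun a => a <= B) q.
Proof.
move=> H; elim: q x => //= y q IH x /andP [h pq].
by rewrite (H _ _ h) (IH y).
Qed.

Lemma iota_path M b a c : b <= a -> a + c <= 3*M -> path (Fn M b) a (iota a.+1 c).
Proof.
elim: c a => //= c IH a h1 h2.
rewrite IH; [|lia|lia]. rewrite /Fn; lia.
Qed.

Lemma last_iota a c : last a (iota a.+1 c) = a + c.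
Proof. elim: c a => [|c IH] a /=; first by rewrite addn0. rewrite IH; lia. Qed.

Lemma nolink (T : finType) (f : T -> nat) (x y z : T) q :
  path (fun u w => f u < f w) z q -> f x < f z -> z != y -> f x < f y ->
  ~~ uses_link x (z :: q) x y.
Proof.
move=> pq hxz zy hxy; rewrite /uses_link /= negb_or.
apply/andP; split.
  rewrite !xpair_eqE (negbTE zy) andbF /=; apply/negP => /andP [/eqP xy _].
  by move: hxy; rewrite xy ltnn.
elim: q z pq hxz {zy} => [|w q IH] z //= /andP [hzw pq] hxz.
rewrite negb_or; apply/andP; split; last by apply: IH => //; lia.
rewrite !xpair_eqE; apply/negP => /orP [] /andP [/eqP e1 /eqP e2].
  by move: hxz; rewrite e1 ltnn.
by move: hzw; rewrite e2; lia.
Qed.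

Lemma path_incr m b (y : 'I_(5*m).+2) q : path (FG m b) y q -> y <= last y q.
Proof.
elim: q y => //= w q IH y /andP [h pq]; have := IH w pq.
by move: h; rewrite /FG /Fn; lia.
Qed.

Lemma cardF m b (x : 'I_(5*m).+2) :
  #|[set y | FG m b x y]| = ((b <= x) && (x < 3*m)) * (2 - (x %% 3 == 2)).
Proof.
have hxN := ltn_ord x.
case hx: ((b <= x) && (x < 3*m)); last first.
  rewrite mul0n; apply/eqP; rewrite cards_eq0; apply/eqP/setP => y; rewrite !inE.
  by apply: negbTE; move: hx; rewrite /FG /Fn; lia.
case h2: (x %% 3 == 2).
  have -> : [set y | FG m b x y] = [set inord x.+1].
    apply/setP => y; rewrite !inE [RHS]eq_sym inord_eq; last lia.
    by move: hx h2; rewrite /FG /Fn; lia.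
  by rewrite cards1.
have -> : [set y | FG m b x y] = [set inord x.+1; inord (x + 2)].
  apply/setP => y; rewrite !inE [y == inord _]eq_sym [y == inord (x + 2)]eq_sym !inord_eq; try lia.
  by move: hx h2; rewrite /FG /Fn; lia.
by rewrite cards2 inord_eq ?inordK; lia.
Qed.

Lemma sum_g m b n : b <= 1 -> 0 < m ->
  \sum_(i < n) ((b <= i) && (i < 3*m)) * (2 - (i %% 3 == 2)) =
  2 * minn n (3*m) - minn n (3*m) %/ 3 - 2*b*(0 < n).
Proof.
move=> hb hm; elim: n => [|n IH]; first by rewrite big_ord0; lia.
rewrite big_ord_recr /= IH; lia.
Qed.

Lemma part2 k : 0 < k ->
     exists (T : finType) (e : rel T) (s d : T) (p : seq T) (F : rel T),
       [/\ simple_graph e, two_connected e, s != d &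
           shortest_path e s d p] /\
       [/\ size p = k, forwarding_subgraph e F s d p,
           avoids_single_link_failure F s d p &
           fs_size F = ceil_5half k].
Proof.
move=> k0.
have [m [b [m0 hb km]]] : exists m b, [/\ 0 < m, b <= 1 & k = 2*m - b].
  by exists (k.+1 %/ 2), (k %% 2); split; lia.
have [hpn spn lpn] := pn_facts m0 hb.
move: hpn spn lpn; set pn := drop b (pn0 m) => hpn spn lpn.
have pnB : all (fun a => a < (5*m).+2) pn.
  have := path_bound (B := 3*m) _ hpn.
  have H : forall a c, Pn m b a c -> c <= 3*m by move=> a c; rewrite /Pn; lia.
  move=> /(_ H) /allP hall; apply/allP => a /hall; lia.
have hbN : b < (5*m).+2 by lia.
have hLN : 3*m < (5*m).+2 by lia.
have pF : path (FG m b) (inord b) (map inord pn).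
  apply: path_inord hbN pnB hpn => a c ha hc; rewrite /FG !inordK // /Pn /Fn; lia.
have pE : path (eG m) (inord b) (map inord pn).
  apply: path_inord hbN pnB hpn => a c ha hc; rewrite /eG !inordK // /Pn /en /base; lia.
have lp : last (inord b) (map inord pn) = inord (3*m) :> 'I_(5*m).+2 by rewrite last_map lpn.
exists ('I_(5*m).+2 : finType), (eG m), (inord b), (inord (3*m)), (map inord pn), (FG m b).
split; split.
- split; [exact: eG_sym | exact: eG_irr].
- exact: two_conn.
- rewrite inord_eq ?inordK //; lia.
- split; first by rewrite /walk pE lp eqxx.
  move=> q /andP [pq /eqP lq]; have := walk_phi pq; rewrite lq !inordK // size_map spn /phi; set sq := size q; lia.
- by rewrite size_map spn.
- split.
  + move=> x y; rewrite /FG /eG /Fn /en /base; lia.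
  + move=> x y Fxy; apply/negP => /connectP [q pq yq].
    have := path_incr pq; rewrite -yq; move: Fxy; rewrite /FG /Fn; lia.
  + by rewrite /walk pF lp eqxx.
- move=> i; rewrite size_map => hi.
  have hP := (pathP b hpn) i hi.
  set xn := nth b (b :: pn) i in hP *; set yn := nth b pn i in hP *.
  have ex : nth (inord b) (inord b :: map inord pn) i = inord xn :> 'I_(5*m).+2.
    by rewrite -(map_cons inord b pn) (nth_map b) //= ltnS ltnW.
  have ey : nth (inord b) (map inord pn) i = inord yn :> 'I_(5*m).+2.
    by rewrite (nth_map b).
  rewrite ex ey.
  move: hP; rewrite /Pn => hP.
  set a := xn + 1 + (xn %% 3 == 0).
  have ha : b <= a /\ a <= 3*m by lia.
  have pq : path (Fn m b) xn (a :: iota a.+1 (3*m - a)).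
    rewrite /= iota_path; [|lia|lia]; rewrite /Fn; lia.
  have qB : all (fun c => c < (5*m).+2) (a :: iota a.+1 (3*m - a)).
    apply/allP => c; rewrite inE mem_iota; lia.
  have pq' : path (FG m b) (inord xn) (map inord (a :: iota a.+1 (3*m - a))).
    apply: path_inord _ _ qB pq; last lia.
    by move=> u w hu hw; rewrite /FG !inordK.
  exists (map inord (a :: iota a.+1 (3*m - a))); apply/andP; split.
    rewrite /walk pq' /= last_map last_iota.
    by have -> : a + (3*m - a) = 3*m by lia.
  rewrite /=; apply: (nolink (f := @nat_of_ord _)).
  + move: pq' => /= /andP [_ h]; apply: sub_path h => u w; rewrite /FG /Fn; lia.
  + rewrite !inordK; lia.
  + apply/negP => /eqP /(congr1 (@nat_of_ord _)); rewrite !inordK; lia.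
  + rewrite !inordK; lia.
- rewrite fs_size_sum.
  under eq_bigr do rewrite cardF.
  rewrite sum_g // /ceil_5half km; lia.
Qed.

Theorem theorem2 :
  (forall (T : finType) (e : rel T) (s d : T) (p : seq T) (F : rel T),
      simple_graph e -> two_connected e -> s != d ->
      shortest_path e s d p ->
      forwarding_subgraph e F s d p ->
      avoids_single_link_failure F s d p ->
      ceil_5half (size p) <= fs_size F)
  /\
  (forall k : nat, 0 < k ->
     exists (T : finType) (e : rel T) (s d : T) (p : seq T) (F : rel T),
       [/\ simple_graph e, two_connected e, s != d &
           shortest_path e s d p] /\
       [/\ size p = k, forwarding_subgraph e F s d p,
           avoids_single_link_failure F s d p &
           fs_size F = ceil_5half k]).
Proof.
split.
  by move=> T e s d p F _ _ _; apply: part1.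
exact: part2.
Qed.
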